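(* For integers $j\ge 0$ define $$f_j:=\frac{j^2+5j+2}{8j+4}\binom{2j+2}{j+1}-4^j,\qquad h_j:=2^{2j-1}-\binom{2j+1}{j}+\binom{2j-1}{j-1}\ (j\ge 1),\qquad h_0:=0,$$ and let $C_j=\frac{1}{j+1}\binom{2j}{j}$ be the $j$-th Catalan number. Then for every integer $s\ge 1$, $$f_s=\sum_{i=1}^{s}C_{s-i}\bigl(2f_{i-1}+h_{i-1}\bigr).$$ *)

(* Defs.v *)
From HB Require Import structures.
From mathcomp Require Import all_boot all_order all_algebra.
Set Implicit Arguments. Unset Strict Implicit. Unset Printing Implicit Defensive.
Import Order.TTheory GRing.Theory Num.Theory.
Local Open Scope ring_scope.

Definition f (j : nat) : rat :=
  ((j ^ 2 + 5 * j + 2)%N%:R / (8 * j + 4)%N%:R) * ('C(j.*2.+2, j.+1))%:R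
  - 4%:R ^+ j.

Definition h (j : nat) : rat :=
  match j with
  | 0 => 0
  | k.+1 => (2 ^ (k.+1).*2.-1)%N%:R - ('C((k.+1).*2.+1, k.+1))%:R
            + ('C((k.+1).*2.-1, k))%:R
  end.

Definition catalan (j : nat) : rat := ('C(j.*2, j))%:R / (j.+1)%:R.

(* Main.v *)
Require Import Defs.
From HB Require Import structures.
From mathcomp Require Import all_boot all_order all_algebra.
From mathcomp.algebra_tactics Require Import ring lra.
From mathcomp Require Import zify.
Import Order.TTheory GRing.Theory Num.Theory.
Local Open Scope ring_scope.

Definition b (k : nat) : rat := ('C(k.*2, k))%:R.
Definition Q (k : nat) : rat := 4%:R ^+ k.

Definition conv (u v : nat -> rat) n := \sum_(k < n.+1) u k * v (n - k)%N.

Lemma conv_comm u v n : conv u v n = conv v u n.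
Proof.
rewrite /conv (reindex_inj rev_ord_inj) /=.
apply: eq_bigr => k _; rewrite subSS subKn; first by rewrite mulrC.
by rewrite -ltnS ltn_ord.
Qed.

Lemma conv_shift u v n : conv u v n.+1 = u 0%N * v n.+1 + conv (fun k => u k.+1) v n.
Proof.
by rewrite /conv big_ord_recl /= subn0.
Qed.

Lemma conv_ext u u' v n : (forall k, u k = u' k) -> conv u v n = conv u' v n.
Proof. by move=> E; rewrite /conv; apply: eq_bigr => k _; rewrite E. Qed.

Lemma conv_add u w v n : conv (fun k => u k + w k) v n = conv u v n + conv w v n.
Proof. by rewrite /conv -big_split; apply: eq_bigr => k _; rewrite mulrDl. Qed.

Lemma conv_sub u w v n : conv (fun k => u k - w k) v n = conv u v n - conv w v n.
Proof. by rewrite /conv -sumrB; apply: eq_bigr => k _; rewrite mulrBl. Qed.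

Lemma conv_scale c u v n : conv (fun k => c * u k) v n = c * conv u v n.
Proof. by rewrite /conv mulr_sumr; apply: eq_bigr => k _; rewrite mulrA. Qed.

Lemma b0 : b 0 = 1. Proof. by rewrite /b bin0. Qed.

Lemma binodd k : 'C(k.*2.+1, k) = 'C(k.*2.+1, k.+1).
Proof.
rewrite -[in RHS]bin_sub; last by lia.
by congr 'C(_, _); lia.
Qed.

Lemma bS k : b k.+1 = 2%:R * ('C(k.*2.+1, k))%:R.
Proof.
rewrite /b doubleS binS -binodd natrD; ring.
Qed.

Lemma Lb k : (k.+1)%:R * b k.+1 = (4 * k + 2)%N%:R * b k.
Proof.
have H : (k.+1 * 'C(k.*2.+1, k) = k.*2.+1 * 'C(k.*2, k))%N.
  by rewrite binodd -(mul_bin_diag k.*2.+1 k).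
rewrite bS /b -!natrM; congr (_%:R).
rewrite mulnCA H mulnA; congr (_ * _)%N; lia.
Qed.
Lemma nz1 (k : nat) : k%:R + 1 != 0 :> rat.
Proof. by rewrite -[1]/(1%:R) -natrD pnatr_eq0 addn1. Qed.

Lemma natS (k : nat) : k.+1%:R = k%:R + 1 :> rat.
Proof. by rewrite -addn1 natrD. Qed.

Lemma bSr k : b k.+1 = (4 * k%:R + 2) / (k%:R + 1) * b k.
Proof.
have := Lb k; rewrite natS natrD natrM => E.
apply: (mulfI (nz1 k)); rewrite E; field; exact: nz1.
Qed.

Lemma Lsym m : conv (fun k => k%:R * b k) b m = m%:R / 2 * conv b b m.
Proof.
have E : conv (fun k => k%:R * b k) b m + conv b (fun k => k%:R * b k) m
         = m%:R * conv b b m.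
  rewrite /conv -big_split mulr_sumr; apply: eq_bigr => /= k _.
  have hk : (k <= m)%N by rewrite -ltnS ltn_ord.
  rewrite natrB //; ring.
rewrite [conv b _ m]conv_comm in E.
have -> : m%:R / 2 * conv b b m = (m%:R * conv b b m) / 2 by ring.
rewrite -E; by field.
Qed.

Lemma T4 n : conv b b n = Q n.
Proof.
elim: n => [|n IH]; first by rewrite /conv big_ord1 b0 mulr1 /Q expr0.
have H1 := Lsym n.+1.
rewrite conv_shift in H1.
rewrite (@conv_ext _ (fun k => 4 * (k%:R * b k) + 2 * b k)) in H1; last first.
  move=> k; rewrite bSr natS; field; exact: nz1.
rewrite conv_add !conv_scale Lsym IH in H1.
apply: (@mulfI _ (n.+1%:R / 2)).
  by rewrite (natS n) mulf_eq0 negb_or nz1.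
rewrite -H1 /Q exprS (natS n); by field.
Qed.

Lemma convBQ m : conv b Q m = (2 * m%:R + 1) * b m.
Proof.
elim: m => [|m IH]; first by rewrite /conv big_ord1 b0 /Q expr0 mulr1; ring.
rewrite /conv big_ord_recr /=.
rewrite (eq_bigr (fun i : 'I_m.+1 => 4 * (b i * Q (m - i)))); last first.
  move=> i _ /=; have hi : (i <= m)%N by rewrite -ltnS ltn_ord.
  by rewrite /Q subSn // exprS; ring.
rewrite -mulr_sumr -[\sum_(_ < _) _]/(conv b Q m) IH subnn /Q expr0 bSr natS.
field; exact: nz1.
Qed.
Lemma f_eq j : f j = ((j%:R ^+ 2 + 5 * j%:R + 2) / (8 * j%:R + 4)) * b j.+1 - Q j.
Proof.
rewrite /f -[('C(j.*2.+2, j.+1))%:R]/(b j.+1) -[4%:R ^+ j]/(Q j).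
rewrite (natrD _ (j ^ 2 + 5 * j) 2) (natrD _ (j ^ 2) (5 * j)) (natrX _ j 2) (natrM _ 5 j).
by rewrite (natrD _ (8 * j) 4) (natrM _ 8 j).
Qed.

Lemma catalan_eq k : catalan k = 2 * b k - 1 / 2 * b k.+1.
Proof.
rewrite /catalan -[('C(k.*2,k))%:R]/(b k) bSr natS; field; exact: nz1.
Qed.

Lemma nzp (x : rat) : 0 < x -> x != 0.
Proof. by move=> h; rewrite gt_eqF. Qed.

Lemma QS j : Q j.+1 = 4 * Q j.
Proof. by rewrite /Q exprS. Qed.

Lemma a_eq k : 2 * f k + h k = (k%:R + 1 / 2) * b k + b k.+1 / 2 - 3 / 2 * Q k.
Proof.
case: k => [|j].
  have b1 : b 1 = 2 by [].
  rewrite f_eq /h b1 b0 /Q expr0. by field.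
have e1 : ('C(j.*2.+1, j))%:R = b j.+1 / 2 :> rat by rewrite bS; field.
have e2 : ('C(j.+1.*2.+1, j.+1))%:R = b j.+2 / 2 :> rat by rewrite bS; field.
have e3 : (2 ^ (j.*2.+1))%N%:R = 2 * Q j :> rat.
  have -> : (2 ^ (j.*2.+1) = 2 * 4 ^ j)%N by rewrite expnS -mul2n expnM.
  by rewrite natrM natrX.
rewrite f_eq /h /= e1 e2 e3 (bSr j.+1) QS (natS j).
have hj : (0:rat) <= j%:R by rewrite ler0n.
field; apply/andP; split; apply: nzp; lra.
Qed.

Definition a k := 2 * f k + h k.

Lemma convBa m : conv b a m =
  m%:R / 2 * Q m + Q m / 2 + (4 * Q m - b m.+1) / 2 - 3 / 2 * ((2 * m%:R + 1) * b m).
Proof.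
rewrite conv_comm.
rewrite (@conv_ext _ (fun k => ((k%:R * b k + 1/2 * b k) + 1/2 * b k.+1) - 3/2 * Q k)); last first.
  by move=> k; rewrite /a a_eq; ring.
rewrite conv_sub !conv_add !conv_scale Lsym T4.
have -> : conv (fun k => b k.+1) b m = Q m.+1 - b m.+1.
  by rewrite -T4 (conv_shift b b m) b0; ring.
rewrite conv_comm convBQ QS; by field.
Qed.

Theorem lemma2p1 (s : nat) (hs : (1 <= s)%N) :
  f s = \sum_(1 <= i < s.+1) catalan (s - i) * (2%:R * f i.-1 + h i.-1).
Proof.
case: s hs => [//|n] _.
rewrite -{1}[1%N]add0n big_addn big_mkord subn1 /=.
have -> : \sum_(i < n.+1) catalan (n.+1 - (i + 1)) * (2%:R * f (i + 1).-1 + h (i + 1).-1)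
   = conv catalan a n.
  rewrite conv_comm /conv; apply: eq_bigr => i _.
  by rewrite addn1 subSS /= mulrC.
rewrite (@conv_ext _ (fun k => 2 * b k - 1/2 * b k.+1)); last by move=> k; rewrite catalan_eq.
rewrite conv_sub !conv_scale.
have -> : conv (fun k => b k.+1) a n = conv b a n.+1 - a n.+1.
  by rewrite (conv_shift b a n) b0; ring.
rewrite !convBa /a a_eq f_eq !QS !bSr !natS.
have hn : (0:rat) <= n%:R by rewrite ler0n.
field; apply/and3P; split; apply: nzp; lra.
Qed.
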